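(* Assume $\alpha=\beta$, let $\mathbf U$ with multiplier $\Lambda$ be the similarity profile, and let $\mathbf u$ be a solution of the scaled system with finite initial relative entropy (of the respective order). Then for all $\tau>0$: (i) if $\alpha\ge2$: $\frac{\mathrm d}{\mathrm d\tau}\mathcal E_{\alpha-1}(\mathbf u|\mathbf U)\le-\frac12\mathcal E_{\alpha-1}(\mathbf u|\mathbf U)+e^{-\tau}\int_{\mathbb R}\frac{\Lambda^2}{4kU^\alpha}\mathrm dy$; (ii) if $\alpha=1$: $\frac{\mathrm d}{\mathrm d\tau}\mathcal E_{1/2}(\mathbf u|\mathbf U)\le-\big(\frac12-\tilde\mu_*\big)\mathcal E_{1/2}(\mathbf u|\mathbf U)+e^{-\tau}\int_{\mathbb R}\frac{11+\sqrt2}{14k}\frac{\Lambda^2}{U}\mathrm dy$, where $\tilde\mu_*=\|\Lambda/U\|_{L^\infty}^2/(k\sqrt8)$.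
   Context: Fix $d_1,d_2,k>0$, real stoichiometric coefficients $\alpha,\beta\ge1$ and $A_-,A_+>0$. The similarity profile is a triple $(U,V,\Lambda)$ with $U,V\in\mathrm C^2(\mathbb R)$ positive, bounded and bounded away from $0$, $\Lambda:\mathbb R\to\mathbb R$, satisfying $d_1U''+\tfrac y2U'+\alpha\Lambda=0$, $d_2V''+\tfrac y2V'-\beta\Lambda=0$, $U^\alpha=V^\beta$ on $\mathbb R$, and $U(\pm\infty)=A_\pm^\beta$, $V(\pm\infty)=A_\pm^\alpha$. The scaled system is $u_\tau=d_1u_{yy}+\tfrac y2u_y+e^\tau\alpha k(v^\beta-u^\alpha)$, $v_\tau=d_2v_{yy}+\tfrac y2v_y-e^\tau\beta k(v^\beta-u^\alpha)$ for $\tau>0$, $y\in\mathbb R$, with $(u,v)(\tau,\pm\infty)=(A_\pm^\beta,A_\pm^\alpha)$. A ''solution'' is a positive classical solution for which the relative entropy is finite and differentiable in $\tau$ with differentiation under the integral allowed, all integrals appearing are finite, and integrations by parts over $\mathbb R$ produce no boundary terms ($\rho,\zeta\to1$ at $\pm\infty$ with sufficient decay). Relative densities $\rho=u/U$, $\zeta=v/V$. Entropy functions: $F_p(z)=\frac{1}{p(p-1)}(z^p-pz+p-1)$ for $p\notin\{0,1\}$, $F_1(z)=z\log z-z+1$. Relative entropy $\mathcal E_p(\mathbf u|\mathbf U)=\int_{\mathbb R}\big(UF_p(\rho)+VF_p(\zeta)\big)\mathrm dy$. $\|\cdot\|_{L^\infty}$ is the supremum of the absolute value. *)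

(* Defs.v *)
From Stdlib Require Import Reals Lra.
From Coquelicot Require Import Coquelicot.
Open Scope R_scope.

Definition integral_R (f : R -> R) : R :=
  RInt_gen f (Rbar_locally m_infty) (Rbar_locally p_infty).
Definition integrable_R (f : R -> R) : Prop :=
  ex_RInt_gen f (Rbar_locally m_infty) (Rbar_locally p_infty).

(* Entropy functions F_p (on z > 0).  F_0 is not used; given its standard form. *)
Definition Fp (p z : R) : R :=
  if Req_EM_T p 1 then z * ln z - z + 1
  else if Req_EM_T p 0 then z - 1 - ln z
  else (Rpower z p - p * z + p - 1) / (p * (p - 1)).

Definition Fpd (p z : R) : R :=
  if Req_EM_T p 1 then ln z
  else if Req_EM_T p 0 then 1 - / z
  else (Rpower z (p - 1) - 1) / (p - 1).

Definition Fpdd (p z : R) : R := Rpower z (p - 2).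

Definition d_tau (w : R -> R -> R) (t y : R) : R := Derive (fun s => w s y) t.
Definition d_y (w : R -> R -> R) (t y : R) : R := Derive (fun z => w t z) y.
Definition d_yy (w : R -> R -> R) (t y : R) : R := Derive (fun z => d_y w t z) y.

(* Supremum norm ||f||_{L^oo} = sup_y |f y| (as a real; used only for bounded f). *)
Definition Linf_norm (f : R -> R) : R :=
  real (Lub_Rbar (fun r => exists y, r = Rabs (f y))).

Definition is_profile (d1 d2 al be Am Ap : R) (U V Lam : R -> R) : Prop :=
  (forall y, ex_derive U y /\ ex_derive (Derive U) y /\ continuous (Derive (Derive U)) y) /\
  (forall y, ex_derive V y /\ ex_derive (Derive V) y /\ continuous (Derive (Derive V)) y) /\
  (exists m M, 0 < m /\ forall y, m <= U y <= M /\ m <= V y <= M) /\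
  (forall y, d1 * Derive (Derive U) y + y / 2 * Derive U y + al * Lam y = 0) /\
  (forall y, d2 * Derive (Derive V) y + y / 2 * Derive V y - be * Lam y = 0) /\
  (forall y, Rpower (U y) al = Rpower (V y) be) /\
  is_lim U m_infty (Rpower Am be) /\ is_lim U p_infty (Rpower Ap be) /\
  is_lim V m_infty (Rpower Am al) /\ is_lim V p_infty (Rpower Ap al).

Definition relent_dens (p : R) (U V : R -> R) (u v : R -> R -> R) (t y : R) : R :=
  U y * Fp p (u t y / U y) + V y * Fp p (v t y / V y).
Definition relent (p : R) (U V : R -> R) (u v : R -> R -> R) (t : R) : R :=
  integral_R (relent_dens p U V u v t).

Definition is_solution (d1 d2 k al be Am Ap : R) (U V Lam : R -> R) (p : R)
    (u v : R -> R -> R) : Prop :=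
  (forall t y, 0 <= t -> 0 < u t y /\ 0 < v t y) /\
  (forall t y, 0 < t ->
     ex_derive (fun s => u s y) t /\ ex_derive (fun z => u t z) y /\
     ex_derive (fun z => d_y u t z) y /\
     ex_derive (fun s => v s y) t /\ ex_derive (fun z => v t z) y /\
     ex_derive (fun z => d_y v t z) y /\
     continuous (fun q : R * R => u (fst q) (snd q)) (t, y) /\
     continuous (fun q : R * R => d_tau u (fst q) (snd q)) (t, y) /\
     continuous (fun q : R * R => d_y u (fst q) (snd q)) (t, y) /\
     continuous (fun q : R * R => d_yy u (fst q) (snd q)) (t, y) /\
     continuous (fun q : R * R => v (fst q) (snd q)) (t, y) /\
     continuous (fun q : R * R => d_tau v (fst q) (snd q)) (t, y) /\
     continuous (fun q : R * R => d_y v (fst q) (snd q)) (t, y) /\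
     continuous (fun q : R * R => d_yy v (fst q) (snd q)) (t, y)) /\
  (forall t y, 0 < t ->
     d_tau u t y = d1 * d_yy u t y + y / 2 * d_y u t y
                   + exp t * al * k * (Rpower (v t y) be - Rpower (u t y) al) /\
     d_tau v t y = d2 * d_yy v t y + y / 2 * d_y v t y
                   - exp t * be * k * (Rpower (v t y) be - Rpower (u t y) al)) /\
  (forall t, 0 < t ->
     is_lim (u t) m_infty (Rpower Am be) /\ is_lim (u t) p_infty (Rpower Ap be) /\
     is_lim (v t) m_infty (Rpower Am al) /\ is_lim (v t) p_infty (Rpower Ap al)) /\
  (forall t, 0 <= t -> integrable_R (relent_dens p U V u v t)) /\
  (forall t, 0 < t ->
     integrable_R (fun y => Derive (fun s => relent_dens p U V u v s y) t) /\
     is_derive (relent p U V u v) t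
       (integral_R (fun y => Derive (fun s => relent_dens p U V u v s y) t))) /\
  integrable_R (fun y => Lam y ^ 2 / Rpower (U y) al) /\
  (forall t, 0 < t ->
     let rho := fun y => u t y / U y in
     let zeta := fun y => v t y / V y in
     integrable_R (fun y => U y * Fp p (rho y)) /\
     integrable_R (fun y => V y * Fp p (zeta y)) /\
     integrable_R (fun y => Fpd p (rho y) * d_tau u t y) /\
     integrable_R (fun y => Fpd p (zeta y) * d_tau v t y) /\
     integrable_R (fun y => Fpd p (rho y) * (d1 * d_yy u t y + y / 2 * d_y u t y)) /\
     integrable_R (fun y => Fpd p (zeta y) * (d2 * d_yy v t y + y / 2 * d_y v t y)) /\
     integrable_R (fun y => U y * Fpdd p (rho y) * (Derive rho y) ^ 2) /\
     integrable_R (fun y => V y * Fpdd p (zeta y) * (Derive zeta y) ^ 2) /\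
     integrable_R (fun y => Lam y * Fp p (rho y)) /\
     integrable_R (fun y => Lam y * Fp p (zeta y)) /\
     integrable_R (fun y => Lam y * rho y * Fpd p (rho y)) /\
     integrable_R (fun y => Lam y * zeta y * Fpd p (zeta y)) /\
     integrable_R (fun y => (al * Fpd p (rho y) - be * Fpd p (zeta y))
                            * (Rpower (v t y) be - Rpower (u t y) al))) /\
  (* no boundary terms in integrations by parts: rho, zeta -> 1 with decay *)
  (forall t, 0 < t ->
     let rho := fun y => u t y / U y in
     let zeta := fun y => v t y / V y in
     is_lim (fun y => y * (rho y - 1)) m_infty 0 /\
     is_lim (fun y => y * (rho y - 1)) p_infty 0 /\
     is_lim (fun y => y * (zeta y - 1)) m_infty 0 /\
     is_lim (fun y => y * (zeta y - 1)) p_infty 0 /\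
     is_lim (Derive rho) m_infty 0 /\ is_lim (Derive rho) p_infty 0 /\
     is_lim (Derive zeta) m_infty 0 /\ is_lim (Derive zeta) p_infty 0).

(* Main.v *)
Require Import Defs.
From Stdlib Require Import Reals Lra FunctionalExtensionality.
From Coquelicot Require Import Coquelicot.
Open Scope R_scope.


Lemma is_derive_Rpower (y z : R) : 0 < z ->
  is_derive (fun x => Rpower x y) z (y * Rpower z (y - 1)).
Proof. intro H; apply is_derive_Reals, derivable_pt_lim_power; exact H. Qed.
Lemma ex_derive_Rpower (y z : R) : 0 < z -> ex_derive (fun x => Rpower x y) z.
Proof. intro H; eexists; apply is_derive_Rpower; exact H. Qed.
Lemma Derive_Rpower (y z : R) : 0 < z -> Derive (fun x => Rpower x y) z = y * Rpower z (y - 1).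
Proof. intro H; apply is_derive_unique, is_derive_Rpower; exact H. Qed.

Lemma Rpower_pos' x y : 0 < Rpower x y.
Proof. unfold Rpower; apply exp_pos. Qed.

Lemma Fp_deriv p z : p <> 0 -> 0 < z -> is_derive (Fp p) z (Fpd p z).
Proof.
  intros Hp Hz. unfold Fp, Fpd.
  destruct (Req_EM_T p 1) as [E|E].
  - subst. auto_derive. lra. field. lra.
  - destruct (Req_EM_T p 0) as [E0|E0]; [contradiction|].
    auto_derive. apply ex_derive_Rpower; auto.
    rewrite Derive_Rpower; auto. field. split; lra.
Qed.

Lemma Fpd_deriv p z : p <> 0 -> 0 < z -> is_derive (Fpd p) z (Fpdd p z).
Proof.
  intros Hp Hz. unfold Fpdd, Fpd.
  destruct (Req_EM_T p 1) as [E|E].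
  - subst. auto_derive. lra. replace (1-2) with (-(1)) by ring.
    rewrite Rpower_Ropp, Rpower_1; auto. field; lra.
  - destruct (Req_EM_T p 0) as [E0|E0]; [contradiction|].
    auto_derive. apply ex_derive_Rpower; auto.
    rewrite Derive_Rpower; auto. replace (p-1-1) with (p-2) by ring. field. lra.
Qed.

Lemma Fp_1 p : Fp p 1 = 0.
Proof. unfold Fp. destruct (Req_EM_T p 1). rewrite ln_1; ring.
  destruct (Req_EM_T p 0). rewrite ln_1; ring.
  unfold Rpower. rewrite ln_1, Rmult_0_r, exp_0. field. split; lra. Qed.

Lemma Fpd_1 p : Fpd p 1 = 0.
Proof. unfold Fpd. destruct (Req_EM_T p 1). rewrite ln_1; ring.
  destruct (Req_EM_T p 0). field.
  unfold Rpower. rewrite ln_1, Rmult_0_r, exp_0. field. lra. Qed.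

Lemma Fpdd_pos p z : 0 < Fpdd p z.
Proof. apply Rpower_pos'. Qed.

Lemma mono_deriv (f df : R -> R) a b : a <= b ->
  (forall x, a <= x <= b -> is_derive f x (df x)) ->
  (forall x, a <= x <= b -> 0 <= df x) -> f a <= f b.
Proof.
  intros Hab Hd Hp.
  destruct (MVT_gen f a b df) as [c [Hc E]].
  - intros x Hx. apply Hd. rewrite Rmin_left, Rmax_right in Hx; lra.
  - intros x Hx. rewrite Rmin_left, Rmax_right in Hx by lra.
    apply continuity_pt_filterlim. apply (ex_derive_continuous (V:=R_NormedModule)). eexists; apply Hd; auto.
  - rewrite Rmin_left, Rmax_right in Hc by lra.
    assert (0 <= df c * (b - a)) by (apply Rmult_le_pos; [apply Hp; auto| lra]). lra.
Qed.

Ltac etared := repeat match goal with |- context [fun x : R => ?f x] => progress change (fun x : R => f x) with f end.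
Ltac reqR := match goal with |- ?a = ?b => change (@eq R a b) end.


Lemma Derive_Fp p z : p <> 0 -> 0 < z -> Derive (fun x => Fp p x) z = Fpd p z.
Proof. intros; apply is_derive_unique, Fp_deriv; auto. Qed.
Lemma Derive_Fpd p z : p <> 0 -> 0 < z -> Derive (fun x => Fpd p x) z = Fpdd p z.
Proof. intros; apply is_derive_unique, Fpd_deriv; auto. Qed.
Lemma ex_derive_Fp p z : p <> 0 -> 0 < z -> ex_derive (fun x => Fp p x) z.
Proof. intros; eexists; apply Fp_deriv; auto. Qed.
Lemma ex_derive_Fpd p z : p <> 0 -> 0 < z -> ex_derive (fun x => Fpd p x) z.
Proof. intros; eexists; apply Fpd_deriv; auto. Qed.

Definition Psi_c (p c : R) (U r : R -> R) (y : R) : R :=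
  c * Derive U y * Fp p (r y) + c * U y * Fpd p (r y) * Derive r y + y/2 * U y * Fp p (r y).

Lemma comp_deriv (U r : R -> R) p c y :
 p <> 0 -> 0 < r y -> ex_derive U y -> ex_derive (Derive U) y -> ex_derive r y -> ex_derive (Derive r) y ->
 is_derive (Psi_c p c U r) y
  (Fpd p (r y) * (c * (Derive (Derive U) y * r y + 2 * Derive U y * Derive r y + U y * Derive (Derive r) y)
      + y/2 * (Derive U y * r y + U y * Derive r y))
   + c * U y * Fpdd p (r y) * (Derive r y)^2
   - (c * Derive (Derive U) y + y/2 * Derive U y) * (r y * Fpd p (r y) - Fp p (r y))
   + 1/2 * U y * Fp p (r y)).
Proof.
  intros Hp Hr HU HU' Hr1 Hr2. unfold Psi_c.
  auto_derive.
  - repeat split; auto using ex_derive_Fp, ex_derive_Fpd.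
  - rewrite !Derive_Fp, !Derive_Fpd by auto.
    change (fun x => Derive U x) with (Derive U).
    change (fun x => Derive r x) with (Derive r).
    change (fun x => U x) with U. change (fun x => r x) with r.
    field.
Qed.


Lemma rho_facts (U w : R -> R) :
  (forall z, 0 < U z) ->
  (forall z, ex_derive U z /\ ex_derive (Derive U) z) ->
  (forall z, ex_derive w z /\ ex_derive (Derive w) z) ->
  forall z,
  ex_derive (fun z => w z / U z) z /\ ex_derive (Derive (fun z => w z / U z)) z /\
  Derive w z = Derive U z * (w z / U z) + U z * Derive (fun z => w z / U z) z /\
  Derive (Derive w) z = Derive (Derive U) z * (w z / U z)
     + 2 * Derive U z * Derive (fun z => w z / U z) z
     + U z * Derive (Derive (fun z => w z / U z)) z.
Proof.
  intros HU HdU Hdw.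
  set (r := fun z => w z / U z).
  assert (Hr : forall z, ex_derive r z).
  { intro z. unfold r. destruct (HdU z), (Hdw z). auto_derive; repeat split; auto.
    specialize (HU z); lra. }
  assert (Er : forall z, Derive r z = (Derive w z * U z - w z * Derive U z) / (U z)^2).
  { intro z. apply is_derive_unique. unfold r. destruct (HdU z), (Hdw z). specialize (HU z).
    auto_derive. repeat split; auto; lra. match goal with |- ?a = ?b => change (@eq R a b) end. etared. field. lra. }
  assert (Hr2 : forall z, ex_derive (Derive r) z).
  { intro z. apply (ex_derive_ext (fun z => (Derive w z * U z - w z * Derive U z) / (U z)^2)).
    intro; rewrite Er; auto. destruct (HdU z), (Hdw z). specialize (HU z).
    auto_derive. repeat split; auto. apply Rgt_not_eq. rewrite Rmult_1_r; apply Rmult_lt_0_compat; auto. }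
  assert (E1 : forall z, Derive w z = Derive U z * r z + U z * Derive r z).
  { intro z. rewrite Er. unfold r. specialize (HU z). field. lra. }
  intro z. repeat split; auto.
  transitivity (Derive (fun z => Derive U z * r z + U z * Derive r z) z).
  - apply Derive_ext. intro; apply E1.
  - apply is_derive_unique. destruct (HdU z). auto_derive.
    repeat split; auto.
    reqR. etared. unfold r. ring.
Qed.


Lemma Fpd_mono p x y : p <> 0 -> 0 < x -> x <= y -> Fpd p x <= Fpd p y.
Proof.
  intros Hp Hx Hxy. apply (mono_deriv (Fpd p) (Fpdd p)); auto.
  intros; apply Fpd_deriv; auto; lra.
  intros; left; apply Fpdd_pos.
Qed.

Lemma Fp_nonneg p z : p <> 0 -> 0 < z -> 0 <= Fp p z.
Proof.
  intros Hp Hz. destruct (Rle_lt_dec 1 z).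
  - rewrite <- (Fp_1 p). apply (mono_deriv (Fp p) (Fpd p)); auto.
    intros; apply Fp_deriv; auto; lra.
    intros. rewrite <- (Fpd_1 p). apply Fpd_mono; auto; lra.
  - rewrite <- (Fp_1 p).
    assert (- Fp p z <= - Fp p 1); [|lra].
    apply (mono_deriv (fun x => - Fp p x) (fun x => - Fpd p x)); try lra.
    intros; apply @is_derive_opp; apply Fp_deriv; auto; lra.
    intros x Hx. assert (Hq : Fpd p x <= Fpd p 1). apply Fpd_mono; auto; lra. rewrite Fpd_1 in Hq. lra.
Qed.

Lemma Fp_le p z : p <> 0 -> 0 < z -> Fp p z <= Fpd p z * (z - 1).
Proof.
  intros Hp Hz.
  set (h := fun x => Fpd p x * (x - 1) - Fp p x).
  assert (Hh : forall x, 0 < x -> is_derive h x (Fpdd p x * (x - 1))).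
  { intros x Hx. unfold h. auto_derive.
    split; [exists (Fpdd p x); apply Fpd_deriv; auto|split; auto; exists (Fpd p x); apply Fp_deriv; auto].
    reqR. etared. rewrite (is_derive_unique _ _ _ (Fpd_deriv p x Hp Hx)).
    rewrite (is_derive_unique _ _ _ (Fp_deriv p x Hp Hx)). ring. }
  assert (h 1 = 0) by (unfold h; rewrite Fp_1, Fpd_1; ring).
  assert (0 <= h z); [|unfold h in *; lra].
  destruct (Rle_lt_dec 1 z).
  - rewrite <- H. apply (mono_deriv h (fun x => Fpdd p x * (x - 1))); auto.
    intros; apply Hh; lra.
    intros; apply Rmult_le_pos; [left; apply Fpdd_pos|lra].
  - assert (- h z <= - h 1); [|lra].
    apply (mono_deriv (fun x => - h x) (fun x => - (Fpdd p x * (x - 1)))); try lra.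
    intros; apply @is_derive_opp; apply Hh; lra.
    intros. assert (0 < Fpdd p x) by apply Fpdd_pos. nra.
Qed.

Definition Gp (p z : R) : R := z * Fpd p z - Fp p z.

Lemma Gp_deriv p z : p <> 0 -> 0 < z -> is_derive (Gp p) z (z * Fpdd p z).
Proof.
  intros Hp Hz. unfold Gp. auto_derive.
  split; [exists (Fpdd p z); apply Fpd_deriv; auto|split; auto; exists (Fpd p z); apply Fp_deriv; auto].
  reqR. etared. rewrite (is_derive_unique _ _ _ (Fpd_deriv p z Hp Hz)).
  rewrite (is_derive_unique _ _ _ (Fp_deriv p z Hp Hz)). ring.
Qed.

Lemma quad_disc A B C : 0 <= A -> (forall l, 0 <= A * l^2 + 2 * B * l + C) -> B^2 <= A * C.
Proof.
  intros HA0 H.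
  destruct (Rlt_le_dec 0 A) as [HA|HA].
  - specialize (H (- B / A)).
    replace (A * (- B / A) ^ 2 + 2 * B * (- B / A) + C) with ((A * C - B^2) / A) in H by (field; lra).
    assert (0 <= A * C - B^2); [|lra].
    apply Rmult_le_reg_r with (/ A). apply Rinv_0_lt_compat; auto.
    rewrite Rmult_0_l. exact H.
  - assert (A = 0) by lra. subst.
    destruct (Req_dec B 0) as [HB|HB].
    + subst. specialize (H 0). nra.
    + exfalso.
      specialize (H (- (Rabs C + 1) / (2 * B))).
      replace (0 * (- (Rabs C + 1) / (2 * B)) ^ 2 + 2 * B * (- (Rabs C + 1) / (2 * B)) + C)
        with (C - (Rabs C + 1)) in H by (field; auto).
      pose proof (Rle_abs C). lra.
Qed.

Lemma Rpower_p_split p s : 0 < s -> Rpower s p = s^2 * Fpdd p s.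
Proof.
  intro Hs. unfold Fpdd. replace p with (2 + (p - 2)) at 1 by ring.
  rewrite Rpower_plus. replace 2 with (INR 2) at 1 by (simpl; ring).
  rewrite Rpower_pow; auto.
Qed.

Lemma CS_aux p r z : 0 < p -> 0 < r -> r <= z ->
  (Gp p z - Gp p r)^2 <= ((Rpower z (p+1) - Rpower r (p+1))/(p+1)) * (Fpd p z - Fpd p r).
Proof.
  intros Hp Hr Hrz.
  assert (Hp0 : p <> 0) by lra.
  rewrite Rmult_comm.
  apply quad_disc.
  - assert (Fpd p r <= Fpd p z) by (apply Fpd_mono; auto). lra.
  - intro l.
    set (Phi := fun s => l^2 * Fpd p s + 2 * l * Gp p s + Rpower s (p+1) / (p+1)).
    assert (Phi r <= Phi z).
    { apply (mono_deriv Phi (fun s => Fpdd p s * (l + s)^2)); auto.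
      - intros x Hx. unfold Phi.
        apply (is_derive_ext (fun s => l^2 * Fpd p s + 2 * l * Gp p s + Rpower s (p+1) * / (p+1))).
        { intro; reflexivity. }
        auto_derive.
        + repeat split. exists (Fpdd p x); apply Fpd_deriv; auto; lra.
          exists (x * Fpdd p x); apply Gp_deriv; auto; lra.
          apply ex_derive_Rpower; lra.
        + reqR. etared. rewrite (is_derive_unique _ _ _ (Fpd_deriv p x Hp0 ltac:(lra))).
          rewrite (is_derive_unique _ _ _ (Gp_deriv p x Hp0 ltac:(lra))).
          rewrite Derive_Rpower by lra. replace (p + 1 - 1) with p by ring.
          rewrite (Rpower_p_split p x) by lra. field. lra.
      - intros x Hx. apply Rmult_le_pos. left; apply Fpdd_pos. apply pow2_ge_0. }
    unfold Phi in H. nra.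
Qed.

Lemma CS_ineq p r z : 0 < p -> 0 < r -> 0 < z ->
  (Gp p z - Gp p r)^2 <= ((Rpower z (p+1) - Rpower r (p+1))/(p+1)) * (Fpd p z - Fpd p r).
Proof.
  intros Hp Hr Hz. destruct (Rle_lt_dec r z).
  - apply CS_aux; auto.
  - pose proof (CS_aux p z r Hp Hz (Rlt_le _ _ r0)).
    replace ((Gp p z - Gp p r)^2) with ((Gp p r - Gp p z)^2) by ring.
    replace (((Rpower z (p+1) - Rpower r (p+1))/(p+1)) * (Fpd p z - Fpd p r)) with
      (((Rpower r (p+1) - Rpower z (p+1))/(p+1)) * (Fpd p r - Fpd p z)) by (field; lra).
    auto.
Qed.

Lemma ptw_i p K W L r z : 0 < p -> 0 < K -> 0 < W -> 0 < r -> 0 < z ->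
  (p+1) * L * (Gp p z - Gp p r)
  + K * (p+1) * (W * Rpower z (p+1) - W * Rpower r (p+1)) * (Fpd p r - Fpd p z)
  <= L^2 / (4 * K * W).
Proof.
  intros Hp HK HW Hr Hz.
  pose proof (CS_ineq p r z Hp Hr Hz) as HC.
  set (X := Gp p z - Gp p r) in *.
  set (Y := (Rpower z (p + 1) - Rpower r (p + 1)) / (p + 1) * (Fpd p z - Fpd p r)) in *.
  assert (E : K * (p+1) * (W * Rpower z (p+1) - W * Rpower r (p+1)) * (Fpd p r - Fpd p z)
              = - K * (p+1)^2 * W * Y) by (unfold Y; field; lra).
  rewrite E.
  assert (HKW : 0 < K * W) by (apply Rmult_lt_0_compat; auto).
  assert (0 <= (L - 2 * K * (p+1) * W * X)^2) by apply pow2_ge_0.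
  assert (L^2 / (4 * K * W) = (L^2) * / (4 * K * W)) by reflexivity.
  assert (K * (p + 1) ^ 2 * W * X^2 <= K * (p + 1) ^ 2 * W * Y).
  { apply Rmult_le_compat_l; auto. apply Rmult_le_pos; [apply Rmult_le_pos|]; try lra. nra. }
  assert ((p + 1) * L * X - K * (p + 1) ^ 2 * W * X^2 <= L^2 / (4 * K * W)).
  { apply Rmult_le_reg_r with (4 * K * W). lra.
    replace (L ^ 2 / (4 * K * W) * (4 * K * W)) with (L^2) by (field; lra). nra. }
  lra.
Qed.


Lemma half_sqrt z : 0 < z -> Rpower z (1/2) = sqrt z.
Proof. intro; replace (1/2) with (/2) by field; apply Rpower_sqrt; auto. Qed.
Lemma mhalf_sqrt z : 0 < z -> Rpower z (1/2 - 1) = / sqrt z.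
Proof. intro; replace (1/2 - 1) with (- (/2)) by field. rewrite Rpower_Ropp, Rpower_sqrt; auto. Qed.

Lemma Fp_half z : 0 < z -> Fp (1/2) z = 2 * (sqrt z - 1)^2.
Proof.
  intro Hz. unfold Fp. destruct (Req_EM_T (1/2) 1). lra. destruct (Req_EM_T (1/2) 0). lra.
  rewrite half_sqrt by auto. pose proof (sqrt_sqrt z (Rlt_le _ _ Hz)).
  remember (sqrt z) as s. rewrite <- H. field.
Qed.

Lemma Fpd_half z : 0 < z -> Fpd (1/2) z = 2 - 2 / sqrt z.
Proof.
  intro Hz. unfold Fpd. destruct (Req_EM_T (1/2) 1). lra. destruct (Req_EM_T (1/2) 0). lra.
  rewrite mhalf_sqrt by auto. pose proof (sqrt_lt_R0 z Hz). field. lra.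
Qed.

Lemma Gp_half z : 0 < z -> Gp (1/2) z = 2 * sqrt z - 2.
Proof.
  intro Hz. unfold Gp. rewrite Fp_half, Fpd_half by auto.
  pose proof (sqrt_lt_R0 z Hz). pose proof (sqrt_sqrt z (Rlt_le _ _ Hz)).
  remember (sqrt z) as s. rewrite <- H0. field. lra.
Qed.

Lemma wA b c : 0 < b -> 0 < c ->
  1 <= 2 * ((b + c) / (b * c)) * (2 * ((b-1)^2 + (c-1)^2) / 3 + 11/14).
Proof.
  intros Hb Hc.
  assert (H1 : (b + c) / (b * c) = / b + / c) by (field; lra).
  rewrite H1.
  assert (H2 : c / 2 <= 2 * ((b-1)^2 + (c-1)^2) / 3 + 11/14) by (pose proof (pow2_ge_0 (c - 11/8)); pose proof (pow2_ge_0 (b-1)); nra).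
  assert (H3 : 0 < / b) by (apply Rinv_0_lt_compat; auto).
  assert (H4 : / c * c = 1) by (field; lra).
  assert (H5 : 0 < / c) by (apply Rinv_0_lt_compat; auto).
  set (A := 2 * ((b-1)^2 + (c-1)^2) / 3 + 11/14) in *.
  assert (H6 : / c * (c/2) <= / c * A) by (apply Rmult_le_compat_l; lra).
  assert (H7 : 0 <= / b * A) by (apply Rmult_le_pos; lra).
  replace (/ c * (c/2)) with (1/2) in H6 by (field; lra).
  lra.
Qed.

(* core algebraic inequality for case (ii), in terms of b = sqrt rho, c = sqrt zeta *)
Lemma ptw_ii_core L K Mu d S w :
  0 < K -> 0 <= S -> 0 < w -> L^2 / (3 * K) <= Mu ->
  1 <= 2 * w * (2 * S / 3 + 11/14) ->
  2 * L * d - 2 * K * d^2 * w <= 2 * Mu * S + 11/14 * L^2 / K.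
Proof.
  intros HK HS Hw HMu Hwa.
  set (A := 2 * S / 3 + 11/14) in *.
  assert (HA : 0 < A) by (unfold A; lra).
  assert (E1 : 2 * Mu * S >= 2 * (L^2 / (3 * K)) * S) by (apply Rle_ge; apply Rmult_le_compat_r; lra).
  assert (E2 : K * d^2 <= 2 * K * d^2 * w * A).
  { assert (0 <= K * d^2) by (apply Rmult_le_pos; [lra|apply pow2_ge_0]).
    replace (2 * K * d^2 * w * A) with (K * d^2 * (2 * w * A)) by ring.
    rewrite <- (Rmult_1_r (K * d^2)) at 1. apply Rmult_le_compat_l; auto. }
  assert (E3 : 2 * L * d * (A * K) <= L^2 * A^2 + K^2 * d^2) by (pose proof (pow2_ge_0 (L * A - K * d)); nra).
  assert (E4 : 2 * L * d <= L^2 * A / K + K * d^2 / A).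
  { apply Rmult_le_reg_r with (A * K). nra.
    replace ((L ^ 2 * A / K + K * d ^ 2 / A) * (A * K)) with (L^2 * A^2 + K^2 * d^2) by (field; lra).
    lra. }
  assert (E5 : K * d^2 / A <= 2 * K * d^2 * w).
  { apply Rmult_le_reg_r with A; auto. replace (K * d ^ 2 / A * A) with (K * d^2) by (field; lra). lra. }
  assert (E6 : L^2 * A / K = 2 * (L^2 / (3 * K)) * S + 11/14 * L^2 / K) by (unfold A; field; lra).
  lra.
Qed.

Lemma ptw_ii Lam Uy M k E r z : 0 < Uy -> 0 < k -> 1 <= E -> Rabs (Lam / Uy) <= M -> 0 < r -> 0 < z ->
  Lam * (Gp (1/2) z - Gp (1/2) r) + E * k * (Uy * (z - r)) * (Fpd (1/2) r - Fpd (1/2) z)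
  <= (M^2 / (k * sqrt 8)) * (Uy * Fp (1/2) r + Uy * Fp (1/2) z)
     + / E * ((11 + sqrt 2) / (14 * k) * (Lam^2 / Uy)).
Proof.
  intros HU Hk HE HM Hr Hz.
  rewrite !Gp_half, !Fpd_half, !Fp_half by auto.
  pose proof (sqrt_lt_R0 r Hr) as Hb. pose proof (sqrt_lt_R0 z Hz) as Hc.
  pose proof (sqrt_sqrt r (Rlt_le _ _ Hr)) as Er. pose proof (sqrt_sqrt z (Rlt_le _ _ Hz)) as Ez.
  remember (sqrt r) as b. remember (sqrt z) as c.
  rewrite <- Er, <- Ez.
  set (L := Lam / Uy) in *.
  assert (EL : Lam = L * Uy) by (unfold L; field; lra).
  rewrite EL.
  set (K := E * k).
  assert (HK : 0 < K) by (unfold K; nra).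
  assert (HL2 : L^2 <= M^2).
  { rewrite <- (Rsqr_pow2 L), <- (Rsqr_pow2 M). rewrite Rsqr_abs. apply Rsqr_incr_1; auto. apply Rabs_pos.
    pose proof (Rabs_pos L); lra. }
  assert (Hs8 : 0 < sqrt 8 <= 3).
  { split. apply sqrt_lt_R0; lra. rewrite <- (sqrt_square 3) by lra. apply sqrt_le_1_alt. lra. }
  assert (HMu : L^2 / (3 * K) <= M^2 / (k * sqrt 8)).
  { apply Rle_trans with (M^2 / (3 * K)).
    - unfold Rdiv. apply Rmult_le_compat_r; auto. left; apply Rinv_0_lt_compat; lra.
    - unfold Rdiv. apply Rmult_le_compat_l. apply pow2_ge_0.
      apply Rinv_le_contravar. apply Rmult_lt_0_compat; lra.
      unfold K. nra. }
  assert (Hs2 : 0 <= sqrt 2) by apply sqrt_pos.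
  assert (Hlast : 11/14 * L^2 / K * Uy <= / E * ((11 + sqrt 2) / (14 * k) * ((L * Uy)^2 / Uy))).
  { replace (/ E * ((11 + sqrt 2) / (14 * k) * ((L * Uy)^2 / Uy))) with
      ((11 + sqrt 2) / 14 * L^2 / K * Uy) by (unfold K; field; lra).
    apply Rmult_le_compat_r; [lra|]. unfold Rdiv. apply Rmult_le_compat_r.
    left; apply Rinv_0_lt_compat; auto. apply Rmult_le_compat_r. apply pow2_ge_0. lra. }
  pose proof (ptw_ii_core L K (M^2 / (k * sqrt 8)) (c - b) ((b-1)^2 + (c-1)^2) ((b + c) / (b * c))
     HK ltac:(pose proof (pow2_ge_0 (b-1)); pose proof (pow2_ge_0 (c-1)); lra) ltac:(apply Rdiv_lt_0_compat; nra) HMu (wA b c Hb Hc)) as Hcore.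
  assert (Eq : L * Uy * (2 * c - 2 - (2 * b - 2)) + K * (Uy * (c * c - b * b)) * (2 - 2 / b - (2 - 2 / c))
     = Uy * (2 * L * (c - b) - 2 * K * (c - b) ^ 2 * ((b + c) / (b * c)))) by (unfold K; field; lra).
  rewrite Eq.
  assert (Eq2 : M ^ 2 / (k * sqrt 8) * (Uy * (2 * (b - 1) ^ 2) + Uy * (2 * (c - 1) ^ 2))
     = Uy * (2 * (M ^ 2 / (k * sqrt 8)) * ((b - 1) ^ 2 + (c - 1) ^ 2))) by ring.
  rewrite Eq2.
  assert (Uy * (2 * L * (c - b) - 2 * K * (c - b) ^ 2 * ((b + c) / (b * c))) <=
          Uy * (2 * (M ^ 2 / (k * sqrt 8)) * ((b - 1) ^ 2 + (c - 1) ^ 2) + 11 / 14 * L ^ 2 / K)).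
  { apply Rmult_le_compat_l; lra. }
  assert (Uy * (11 / 14 * L ^ 2 / K) = 11 / 14 * L ^ 2 / K * Uy) by ring.
  lra.
Qed.


Lemma lim_iff {T} (F : (T -> Prop) -> Prop) {FF : Filter F} (f : T -> R) l :
  filterlim f F (locally l) <-> forall eps, 0 < eps -> F (fun x => Rabs (f x - l) < eps).
Proof.
  rewrite filterlim_locally. split.
  - intros H eps He. specialize (H (mkposreal eps He)). exact H.
  - intros H eps. apply (H eps (cond_pos eps)).
Qed.

Lemma lim0_squeeze {T} (F : (T -> Prop) -> Prop) {FF : Filter F} (f g : T -> R) :
  F (fun x => Rabs (f x) <= g x) -> filterlim g F (locally 0) -> filterlim f F (locally 0).
Proof.
  intros Hb Hg. apply (proj2 (lim_iff F _ _)). intros eps He. pose proof (proj1 (lim_iff F g 0) Hg) as Hg0; clear Hg; rename Hg0 into Hg.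
  generalize (@filter_and _ F FF _ _ Hb (Hg eps He)). apply filter_imp.
  intros x [H1 H2]. rewrite Rminus_0_r in *. pose proof (Rle_abs (g x)). lra.
Qed.

Lemma lim0_plus {T} (F : (T -> Prop) -> Prop) {FF : Filter F} (f g : T -> R) :
  filterlim f F (locally 0) -> filterlim g F (locally 0) -> filterlim (fun x => f x + g x) F (locally 0).
Proof.
  intros Hf Hg. apply (proj2 (lim_iff F _ _)). intros eps He. pose proof (proj1 (lim_iff F g 0) Hg) as Hg0; clear Hg; rename Hg0 into Hg. pose proof (proj1 (lim_iff F f 0) Hf) as Hf0; clear Hf; rename Hf0 into Hf.
  generalize (@filter_and _ F FF _ _ (Hf (eps/2) ltac:(lra)) (Hg (eps/2) ltac:(lra))). apply filter_imp.
  intros x [H1 H2]. rewrite Rminus_0_r in *. pose proof (Rabs_triang (f x) (g x)). lra.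
Qed.

Lemma lim0_bnd {T} (F : (T -> Prop) -> Prop) {FF : Filter F} (f g : T -> R) B :
  F (fun x => Rabs (f x) <= B) -> filterlim g F (locally 0) -> filterlim (fun x => f x * g x) F (locally 0).
Proof.
  intros Hf Hg. apply (proj2 (lim_iff F _ _)). intros eps He. pose proof (proj1 (lim_iff F g 0) Hg) as Hg0; clear Hg; rename Hg0 into Hg.
  generalize (@filter_and _ F FF _ _ Hf (Hg (eps / (Rabs B + 1)) ltac:(apply Rdiv_lt_0_compat; [lra| pose proof (Rabs_pos B); lra]))).
  apply filter_imp. intros x [H1 H2]. rewrite Rminus_0_r in *. rewrite Rabs_mult.
  pose proof (Rabs_pos B). pose proof (Rabs_pos (f x)). pose proof (Rabs_pos (g x)).
  pose proof (Rle_abs B).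
  apply Rle_lt_trans with ((Rabs B + 1) * Rabs (g x)).
  apply Rmult_le_compat_r; lra.
  apply Rmult_lt_reg_l with (/ (Rabs B + 1)). apply Rinv_0_lt_compat; lra.
  rewrite <- Rmult_assoc, Rinv_l, Rmult_1_l by lra. lra.
Qed.

Lemma lim0_mult {T} (F : (T -> Prop) -> Prop) {FF : Filter F} (f g : T -> R) :
  filterlim f F (locally 0) -> filterlim g F (locally 0) -> filterlim (fun x => f x * g x) F (locally 0).
Proof.
  intros Hf Hg. apply (lim0_bnd F f g 1); auto.
  pose proof (proj1 (lim_iff F f 0) Hf) as Hf0; clear Hf; rename Hf0 into Hf. generalize (Hf 1 ltac:(lra)). apply filter_imp. intros x H; rewrite Rminus_0_r in H; lra.
Qed.

Lemma lim_comp_cont {T} (F : (T -> Prop) -> Prop) {FF : Filter F} (h : R -> R) (f : T -> R) c :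
  filterlim f F (locally c) -> continuity_pt h c -> filterlim (fun x => h (f x)) F (locally (h c : R)).
Proof.
  intros Hf Hh. apply continuity_pt_filterlim in Hh.
  eapply filterlim_comp; eauto.
Qed.

Lemma lim_const {T} (F : (T -> Prop) -> Prop) {FF : Filter F} (c : R) : filterlim (fun _ : T => c) F (locally c).
Proof. apply filterlim_const. Qed.

Lemma lim_sub {T} (F : (T -> Prop) -> Prop) {FF : Filter F} (f : T -> R) l :
  filterlim f F (locally l) <-> filterlim (fun x => f x - l) F (locally 0).
Proof. split; intro H; apply (proj2 (lim_iff F _ _)); intros eps He.
  - generalize (proj1 (lim_iff F _ _) H eps He); apply filter_imp; intros x; rewrite ?Rminus_0_r; auto.
  - generalize (proj1 (lim_iff F _ _) H eps He); apply filter_imp; intros x; rewrite ?Rminus_0_r; auto. Qed.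

Lemma ev_abs_ge1_m : Rbar_locally m_infty (fun y => 1 <= Rabs y).
Proof. exists (-1). intros x Hx. rewrite Rabs_left by lra. lra. Qed.
Lemma ev_abs_ge1_p : Rbar_locally p_infty (fun y => 1 <= Rabs y).
Proof. exists 1. intros x Hx. rewrite Rabs_right by lra. lra. Qed.


Lemma const_deriv0 (f : R -> R) : (forall x, is_derive f x 0) -> forall x y, f x = f y.
Proof.
  intros H. assert (forall x y, x <= y -> f x <= f y).
  { intros x y Hxy. apply (mono_deriv f (fun _ => 0)); auto; intros; lra. }
  intros x y. destruct (Rle_lt_dec x y).
  - assert (- f x <= - f y); [|specialize (H0 x y r); lra].
    apply (mono_deriv (fun z => - f z) (fun _ => 0)); auto.
    intros. replace 0 with (- 0) by ring. apply @is_derive_opp. apply H. intros; lra.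
  - assert (- f y <= - f x); [|specialize (H0 y x (Rlt_le _ _ r)); lra].
    apply (mono_deriv (fun z => - f z) (fun _ => 0)); [lra| |]; auto.
    intros. replace 0 with (- 0) by ring. apply @is_derive_opp. apply H. intros; lra.
Qed.

Lemma profile_U_eq_V d1 d2 a Am Ap U V Lam : 1 <= a ->
  is_profile d1 d2 a a Am Ap U V Lam -> (forall y, 0 < U y) /\ V = U.
Proof.
  intros Ha (HU & HV & [m [M [Hm HmM]]] & _ & _ & HP & _).
  assert (HUp : forall y, 0 < U y) by (intro y; destruct (HmM y) as [[? ?] _]; lra).
  split; auto.
  apply functional_extensionality. intro y.
  destruct (HmM y) as [_ [? ?]].
  specialize (HP y). unfold Rpower in HP. apply (f_equal ln) in HP. rewrite !ln_exp in HP.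
  apply ln_inv; [lra| apply HUp|].
  apply Rmult_eq_reg_l with a; [|lra]. auto.
Qed.

Lemma U_deriv_bounds d1 d2 a Am Ap U Lam : 0 < d1 -> 0 < d2 -> 1 <= a ->
  is_profile d1 d2 a a Am Ap U U Lam ->
  exists B, 0 <= B /\ forall y, Rabs (Derive U y) <= B /\ Rabs (y * Derive U y) <= B.
Proof.
  intros Hd1 Hd2 Ha (HU & _ & _ & HP1 & HP2 & _).
  remember (d1 + d2) as D eqn:HeqD.
  assert (HD : 0 < D) by lra.
  set (W := fun y => Derive U y * exp (y^2 / (2 * D))).
  assert (HW : forall y, is_derive W y 0).
  { intro y. unfold W. destruct (HU y) as [H1 [H2 _]].
    auto_derive. auto.
    reqR. etared.
    specialize (HP1 y). specialize (HP2 y).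
    assert (E : D * Derive (Derive U) y + y * Derive U y = 0) by (rewrite HeqD; lra).
    assert (E2 : Derive (Derive U) y = - (y * Derive U y) / D).
    { apply Rmult_eq_reg_l with D; [|lra]. replace (D * (- (y * Derive U y) / D)) with (- (y * Derive U y)) by (field; lra). lra. }
    rewrite E2. field. lra. }
  pose proof (const_deriv0 W HW) as HWc.
  set (C := W 0).
  assert (HUd : forall y, Derive U y = C * exp (- (y^2 / (2 * D)))).
  { intro y. unfold C. rewrite (HWc 0 y). unfold W. rewrite exp_Ropp. field.
    apply Rgt_not_eq, exp_pos. }
  exists (Rabs C * (1 + 2 * D)). split.
  { apply Rmult_le_pos; [apply Rabs_pos|lra]. }
  intro y.
  assert (Hx : 0 <= y^2 / (2 * D)) by (apply Rmult_le_pos; [apply pow2_ge_0| left; apply Rinv_0_lt_compat; lra]).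
  pose proof (exp_ineq1_le (y^2 / (2 * D))) as Hexp.
  assert (He : 0 < exp (y^2 / (2*D))) by apply exp_pos.
  rewrite HUd, exp_Ropp. split.
  - rewrite Rabs_mult, Rabs_inv, (Rabs_right (exp _)) by lra.
    apply Rle_trans with (Rabs C * 1). 2:{ pose proof (Rabs_pos C). nra. }
    apply Rmult_le_compat_l. apply Rabs_pos.
    rewrite <- Rinv_1. apply Rinv_le_contravar; lra.
  - rewrite !Rabs_mult, Rabs_inv, (Rabs_right (exp _)) by lra.
    assert (Hy : Rabs y <= (1 + 2 * D) * (1 + y^2 / (2 * D))).
    { replace ((1 + 2 * D) * (1 + y^2 / (2 * D))) with (1 + 2 * D + y^2 / (2*D) + y^2) by (field; lra).
      assert (Rabs y <= 1 + y^2).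
      { rewrite <- (Rsqr_pow2 y), Rsqr_abs, Rsqr_pow2. pose proof (pow2_ge_0 (Rabs y - 1)). nra. }
      lra. }
    assert (Rabs y * / exp (y ^ 2 / (2 * D)) <= 1 + 2 * D).
    { apply Rmult_le_reg_r with (exp (y ^ 2 / (2 * D))); auto.
      rewrite Rmult_assoc, Rinv_l, Rmult_1_r by lra. nra. }
    pose proof (Rabs_pos C). pose proof (Rabs_pos y).
    replace (Rabs y * (Rabs C * / exp (y ^ 2 / (2 * D)))) with (Rabs C * (Rabs y * / exp (y ^ 2 / (2 * D)))) by ring.
    apply Rmult_le_compat_l; auto.
Qed.


Lemma lim0_abs {T} (F : (T -> Prop) -> Prop) {FF : Filter F} (f : T -> R) :
  filterlim f F (locally 0) -> filterlim (fun x => Rabs (f x)) F (locally 0).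
Proof.
  intro H. apply (proj2 (lim_iff F _ _)). intros eps He.
  generalize (proj1 (lim_iff F _ _) H eps He). apply filter_imp.
  intros x Hx. rewrite Rminus_0_r in *. rewrite Rabs_Rabsolu. auto.
Qed.

Lemma ctp_ex_derive f x : ex_derive f x -> continuity_pt f x.
Proof. intro H. apply continuity_pt_filterlim. apply (ex_derive_continuous (V:=R_NormedModule)). auto. Qed.

Lemma Psi_c_lim (F : (R -> Prop) -> Prop) {FF : Filter F} p c (U r : R -> R) B :
  p <> 0 -> (forall y, Rabs (U y) <= B /\ Rabs (Derive U y) <= B) -> (forall y, 0 < r y) ->
  filterlim (fun y => y * (r y - 1)) F (locally 0) -> filterlim (Derive r) F (locally 0) ->
  F (fun y => 1 <= Rabs y) ->
  filterlim (Psi_c p c U r) F (locally 0).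
Proof.
  intros Hp HB Hr Hyr Hdr Hy.
  assert (Hr1 : filterlim r F (locally 1)).
  { apply (proj2 (lim_sub F r 1)). apply (lim0_squeeze F _ (fun y => Rabs (y * (r y - 1)))).
    - generalize Hy. apply filter_imp. intros y Hy1. rewrite Rabs_mult.
      pose proof (Rabs_pos (r y - 1)). nra.
    - refine (lim0_abs F _ _); auto. }
  assert (HFp : filterlim (fun y => Fp p (r y)) F (locally 0)).
  { rewrite <- (Fp_1 p). refine (lim_comp_cont F _ _ _ _ _); auto. apply ctp_ex_derive. exists (Fpd p 1). apply Fp_deriv; auto; lra. }
  assert (HFpd : filterlim (fun y => Fpd p (r y)) F (locally 0)).
  { rewrite <- (Fpd_1 p). refine (lim_comp_cont F _ _ _ _ _); auto. apply ctp_ex_derive. exists (Fpdd p 1). apply Fpd_deriv; auto; lra. }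
  refine (filterlim_ext (F:=F) (fun y => ((c * Derive U y) * Fp p (r y) + (c * U y) * (Fpd p (r y) * Derive r y))
                                 + (U y / 2) * (y * Fp p (r y))) (Psi_c p c U r) _ _).
  { intro y. unfold Psi_c. field. }
  refine (lim0_plus F _ _ (lim0_plus F _ _ _ _) _).
  - apply (lim0_bnd F _ _ (Rabs c * B)); auto.
    apply filter_forall. intro y. rewrite Rabs_mult. apply Rmult_le_compat_l. apply Rabs_pos. apply HB.
  - apply (lim0_bnd F _ _ (Rabs c * B)); auto.
    apply filter_forall. intro y. rewrite Rabs_mult. apply Rmult_le_compat_l. apply Rabs_pos. apply HB.
    refine (lim0_mult F _ _ _ _); auto.
  - apply (lim0_bnd F _ _ (B / 2)); auto.
    apply filter_forall. intro y. unfold Rdiv. rewrite Rabs_mult. rewrite (Rabs_right (/2)) by lra.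
    apply Rmult_le_compat_r. lra. apply HB.
    apply (lim0_squeeze F _ (fun y => Rabs (y * (r y - 1)) * Rabs (Fpd p (r y)))).
    + apply filter_forall. intro y.
      pose proof (Fp_nonneg p (r y) Hp (Hr y)). pose proof (Fp_le p (r y) Hp (Hr y)).
      rewrite Rabs_mult, Rabs_mult, (Rabs_right (Fp p (r y))) by lra.
      rewrite Rmult_assoc. apply Rmult_le_compat_l. apply Rabs_pos.
      rewrite Rmult_comm. rewrite <- Rabs_mult. eapply Rle_trans; [|apply Rle_abs]. lra.
    + refine (lim0_mult F _ _ (lim0_abs F _ _) (lim0_abs F _ _)); auto.
Qed.


Lemma int_step (g Psi Psi' : R -> R) (l : R) :
  (forall y, continuity_pt g y) -> (forall y, is_derive Psi y (Psi' y)) ->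
  (forall y, 0 <= Psi' y + g y) ->
  filterlim Psi (Rbar_locally m_infty) (locally 0) ->
  filterlim Psi (Rbar_locally p_infty) (locally 0) ->
  is_RInt_gen g (Rbar_locally m_infty) (Rbar_locally p_infty) l -> 0 <= l.
Proof.
  intros Hg HPsi Hpos Hm Hp Hint.
  assert (Hgc : forall y, continuous g y) by (intro; apply continuity_pt_filterlim; auto).
  assert (Hex : forall a b, ex_RInt g a b) by (intros; apply (ex_RInt_continuous (V:=R_CompleteNormedModule)); auto).
  assert (step1 : forall a b, a <= b -> Psi a - Psi b <= RInt g a b).
  { intros a b Hab.
    assert (Psi a + RInt g a a <= Psi b + RInt g a b).
    { apply (mono_deriv (fun x => Psi x + RInt g a x) (fun x => Psi' x + g x)); auto.
      intros x _. apply @is_derive_plus. apply HPsi.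
      apply (is_derive_RInt g (RInt g a) a x).
      apply filter_forall. intro z. apply (RInt_correct (V:=R_CompleteNormedModule)). auto. auto. }
    assert (Hz : RInt g a a = 0) by (apply (RInt_point (V:=R_CompleteNormedModule))). lra. }
  destruct (Rle_lt_dec 0 l) as [Hl|Hl]; auto. exfalso.
  set (eps := - l / 3).
  assert (He : 0 < eps) by (unfold eps; lra).
  assert (H1 : filter_prod (Rbar_locally m_infty) (Rbar_locally p_infty)
     (fun ab => exists y, is_RInt g (fst ab) (snd ab) y /\ ball l eps y)).
  { apply Hint. apply (locally_ball l (mkposreal eps He)). }
  assert (H2 : filter_prod (Rbar_locally m_infty) (Rbar_locally p_infty)
     (fun ab => Rabs (Psi (fst ab)) < eps /\ fst ab < 0)).
  { apply (filterlim_fst (F:=Rbar_locally m_infty) (G:=Rbar_locally p_infty) (fun a => Rabs (Psi a) < eps /\ a < 0)).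
    apply filter_and.
    - generalize (proj1 (lim_iff _ _ _) Hm eps He). apply filter_imp. intros x; rewrite Rminus_0_r; auto.
    - exists 0. auto. }
  assert (H3 : filter_prod (Rbar_locally m_infty) (Rbar_locally p_infty)
     (fun ab => Rabs (Psi (snd ab)) < eps /\ 0 < snd ab)).
  { apply (filterlim_snd (F:=Rbar_locally m_infty) (G:=Rbar_locally p_infty) (fun b => Rabs (Psi b) < eps /\ 0 < b)).
    apply filter_and.
    - generalize (proj1 (lim_iff _ _ _) Hp eps He). apply filter_imp. intros x; rewrite Rminus_0_r; auto.
    - exists 0. auto. }
  destruct (filter_ex _ (filter_and _ _ H1 (filter_and _ _ H2 H3))) as [[a b] [[y [Hy1 Hy2]] [[Ha1 Ha2] [Hb1 Hb2]]]].
  simpl in *.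
  apply (is_RInt_unique (V:=R_CompleteNormedModule)) in Hy1.
  pose proof (step1 a b ltac:(lra)) as S. rewrite Hy1 in S.
  change (Rabs (y - l) < eps) in Hy2.
  apply Rabs_def2 in Hy2. apply Rabs_def2 in Ha1. apply Rabs_def2 in Hb1.
  unfold eps in *. lra.
Qed.


Definition Psi_c_d (p c : R) (U r : R -> R) (y : R) : R :=
  Fpd p (r y) * (c * (Derive (Derive U) y * r y + 2 * Derive U y * Derive r y + U y * Derive (Derive r) y)
      + y/2 * (Derive U y * r y + U y * Derive r y))
   + c * U y * Fpdd p (r y) * (Derive r y)^2
   - (c * Derive (Derive U) y + y/2 * Derive U y) * (r y * Fpd p (r y) - Fp p (r y))
   + 1/2 * U y * Fp p (r y).

Lemma cont2_slice (w : R -> R -> R) t y :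
  continuous (fun q : R * R => w (fst q) (snd q)) (t, y) -> continuity_pt (fun z => w t z) y.
Proof.
  intro H. apply continuity_pt_filterlim.
  apply (continuous_comp_2 (fun _ : R => t) (fun z : R => z) w y).
  apply continuous_const. apply continuous_id. exact H.
Qed.

Lemma main_gen d1 d2 k a Am Ap U V Lam p u v t Q :
  0 < d1 -> 0 < d2 -> 0 < k -> 1 <= a -> p <> 0 ->
  is_profile d1 d2 a a Am Ap U V Lam ->
  is_solution d1 d2 k a a Am Ap U V Lam p u v -> 0 < t ->
  (forall y, continuity_pt Q y) -> integrable_R Q ->
  (forall y, a * Lam y * (Gp p (v t y / V y) - Gp p (u t y / U y))
       + exp t * a * k * (Rpower (v t y) a - Rpower (u t y) a)
         * (Fpd p (u t y / U y) - Fpd p (v t y / V y)) <= Q y) ->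
  Derive (relent p U V u v) t <= -(1/2) * relent p U V u v t + integral_R Q.
Proof.
  intros Hd1 Hd2 Hk Ha Hp Hprof Hsol Ht HQc HQi HQb.
  destruct (profile_U_eq_V d1 d2 a Am Ap U V Lam Ha Hprof) as [HUp EV]. subst V.
  destruct (U_deriv_bounds d1 d2 a Am Ap U Lam Hd1 Hd2 Ha Hprof) as [B1 [HB1 HB1']].
  destruct Hprof as (HU & _ & [m [M [Hm HmM]]] & HP1 & HP2 & _).
  destruct Hsol as (Hpos & Hreg & Hpde & Hbd & Hint0 & Hder & HintLam & Hints & Hlims).
  set (r := fun z => u t z / U z).
  set (s := fun z => v t z / U z).
  assert (Hr : forall y, 0 < r y).
  { intro y; unfold r; destruct (Hpos t y) as [H1 _]; try lra. apply Rdiv_lt_0_compat; auto. }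
  assert (Hs : forall y, 0 < s y).
  { intro y; unfold s; destruct (Hpos t y) as [_ H1]; try lra. apply Rdiv_lt_0_compat; auto. }
  assert (HUd : forall z, ex_derive U z /\ ex_derive (Derive U) z) by (intro z; destruct (HU z) as [? [? ?]]; auto).
  assert (HRu := rho_facts U (u t) HUp HUd ltac:(intro z; destruct (Hreg t z Ht) as (_ & H1 & H2 & _); split; [exact H1|exact H2])).
  assert (HRv := rho_facts U (v t) HUp HUd ltac:(intro z; destruct (Hreg t z Ht) as (_ & _ & _ & _ & H1 & H2 & _); split; [exact H1|exact H2])).
  fold r in HRu. fold s in HRv.
  set (Psi := fun y => Psi_c p d1 U r y + Psi_c p d2 U s y).
  set (Psi' := fun y => Psi_c_d p d1 U r y + Psi_c_d p d2 U s y).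
  assert (HPsi : forall y, is_derive Psi y (Psi' y)).
  { intro y. unfold Psi, Psi'. apply @is_derive_plus.
    - destruct (HRu y) as (? & ? & _). apply comp_deriv; auto; apply HUd.
    - destruct (HRv y) as (? & ? & _). apply comp_deriv; auto; apply HUd. }
  set (Dd := fun y => Derive (fun s0 => relent_dens p U U u v s0 y) t).
  assert (HD : forall y, Dd y = Fpd p (r y) * d_tau u t y + Fpd p (s y) * d_tau v t y).
  { intro y. unfold Dd, relent_dens. apply is_derive_unique.
    destruct (Hreg t y Ht) as (Hu1 & _ & _ & Hv1 & _).
    pose proof (Hr y) as Hry. pose proof (Hs y) as Hsy. unfold r, s in Hry, Hsy.
    auto_derive.
    - repeat split; auto; apply ex_derive_Fp; auto.
    - reqR. etared. unfold d_tau.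
      rewrite !Derive_Fp by auto. unfold r, s, Rdiv. field. apply Rgt_not_eq, HUp. }
  set (dens := relent_dens p U U u v t).
  set (g := fun y => Q y - 1/2 * dens y - Dd y).
  assert (Hkey : forall y, 0 <= Psi' y + g y).
  { intro y. unfold g, dens, relent_dens. rewrite HD.
    destruct (Hpde t y Ht) as [Eu Ev].
    destruct (HRu y) as (_ & _ & Ru1 & Ru2). destruct (HRv y) as (_ & _ & Rv1 & Rv2).
    assert (Eyu : d_y u t y = Derive (u t) y) by reflexivity.
    assert (Eyyu : d_yy u t y = Derive (Derive (u t)) y) by (unfold d_yy, d_y; reflexivity).
    assert (Eyv : d_y v t y = Derive (v t) y) by reflexivity.
    assert (Eyyv : d_yy v t y = Derive (Derive (v t)) y) by (unfold d_yy, d_y; reflexivity).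
    rewrite Eyu, Eyyu, Ru1, Ru2 in Eu. rewrite Eyv, Eyyv, Rv1, Rv2 in Ev.
    rewrite Eu, Ev. clear Eu Ev.
    unfold Psi', Psi_c_d.
    specialize (HP1 y). specialize (HP2 y).
    replace (d1 * Derive (Derive U) y + y / 2 * Derive U y) with (- (a * Lam y)) by lra.
    replace (d2 * Derive (Derive U) y + y / 2 * Derive U y) with (a * Lam y) by lra.
    assert (N1 : 0 <= d1 * U y * Fpdd p (r y) * (Derive r y)^2).
    { apply Rmult_le_pos. apply Rmult_le_pos. apply Rmult_le_pos. lra. left; apply HUp. left; apply Fpdd_pos. apply pow2_ge_0. }
    assert (N2 : 0 <= d2 * U y * Fpdd p (s y) * (Derive s y)^2).
    { apply Rmult_le_pos. apply Rmult_le_pos. apply Rmult_le_pos. lra. left; apply HUp. left; apply Fpdd_pos. apply pow2_ge_0. }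
    specialize (HQb y). unfold Gp in HQb. fold (r y) (s y) in HQb.
    unfold r, s in *. lra. }
  assert (Hgc : forall y, continuity_pt g y).
  { intro y.
    destruct (Hreg t y Ht) as (_ & _ & _ & _ & _ & _ & _ & Cu & _ & _ & _ & Cv & _ & _).
    apply cont2_slice in Cu. apply cont2_slice in Cv.
    destruct (HRu y) as (Hr1 & _). destruct (HRv y) as (Hs1 & _).
    assert (CU : continuity_pt U y) by (apply ctp_ex_derive, HUd).
    assert (Cr : continuity_pt r y) by (apply ctp_ex_derive; auto).
    assert (Cs : continuity_pt s y) by (apply ctp_ex_derive; auto).
    assert (CFr : continuity_pt (fun z => Fp p (r z)) y).
    { apply (continuity_pt_comp r (Fp p)); auto. apply ctp_ex_derive, ex_derive_Fp; auto. }
    assert (CFs : continuity_pt (fun z => Fp p (s z)) y).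
    { apply (continuity_pt_comp s (Fp p)); auto. apply ctp_ex_derive, ex_derive_Fp; auto. }
    assert (CFdr : continuity_pt (fun z => Fpd p (r z)) y).
    { apply (continuity_pt_comp r (Fpd p)); auto. apply ctp_ex_derive, ex_derive_Fpd; auto. }
    assert (CFds : continuity_pt (fun z => Fpd p (s z)) y).
    { apply (continuity_pt_comp s (Fpd p)); auto. apply ctp_ex_derive, ex_derive_Fpd; auto. }
    apply (continuity_pt_ext (fun z => Q z - (fun _ => 1/2) z * (U z * Fp p (r z) + U z * Fp p (s z))
         - (Fpd p (r z) * d_tau u t z + Fpd p (s z) * d_tau v t z))).
    { intro z. unfold g, dens. rewrite HD. reflexivity. }
    apply continuity_pt_minus. apply continuity_pt_minus. auto.
    apply continuity_pt_mult. apply continuity_pt_const. intros ? ?; reflexivity.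
    apply continuity_pt_plus; apply continuity_pt_mult; auto.
    apply continuity_pt_plus; apply continuity_pt_mult; auto. }
  destruct (Hlims t Ht) as (L1 & L2 & L3 & L4 & L5 & L6 & L7 & L8).
  set (BB := Rmax M B1).
  assert (HBB : forall y, Rabs (U y) <= BB /\ Rabs (Derive U y) <= BB).
  { intro y. unfold BB. split.
    - destruct (HmM y) as [[? ?] _]. rewrite Rabs_right by lra. eapply Rle_trans; [|apply Rmax_l]. lra.
    - eapply Rle_trans; [apply HB1'|apply Rmax_r]. }
  assert (HPm : filterlim Psi (Rbar_locally m_infty) (locally 0)).
  { refine (lim0_plus _ _ _ (Psi_c_lim _ p d1 U r BB Hp HBB Hr L1 L5 ev_abs_ge1_m)
                            (Psi_c_lim _ p d2 U s BB Hp HBB Hs L3 L7 ev_abs_ge1_m)). }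
  assert (HPp : filterlim Psi (Rbar_locally p_infty) (locally 0)).
  { refine (lim0_plus _ _ _ (Psi_c_lim _ p d1 U r BB Hp HBB Hr L2 L6 ev_abs_ge1_p)
                            (Psi_c_lim _ p d2 U s BB Hp HBB Hs L4 L8 ev_abs_ge1_p)). }
  destruct (Hder t Ht) as [HDi HDd].
  rewrite (is_derive_unique _ _ _ HDd).
  pose proof (RInt_gen_correct _ HQi) as IQ.
  pose proof (RInt_gen_correct _ (Hint0 t (Rlt_le _ _ Ht))) as Idens.
  pose proof (RInt_gen_correct _ HDi) as ID.
  assert (Ig : is_RInt_gen g (Rbar_locally m_infty) (Rbar_locally p_infty)
     (integral_R Q - 1/2 * relent p U U u v t - integral_R Dd)).
  { apply (is_RInt_gen_ext (fun y => minus (minus (Q y) (scal (1/2) (dens y))) (Dd y))).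
    apply filter_forall. intros; reflexivity.
    apply (is_RInt_gen_minus (V:=R_NormedModule)). apply (is_RInt_gen_minus (V:=R_NormedModule)). exact IQ.
    apply (is_RInt_gen_scal (V:=R_NormedModule)). exact Idens. exact ID. }
  pose proof (int_step g Psi Psi' _ Hgc HPsi Hkey HPm HPp Ig).
  unfold Dd in H. unfold relent in *. unfold integral_R in *.
  clear - H. lra.
Qed.


Lemma Linf_ge (f : R -> R) C : (forall y, Rabs (f y) <= C) -> forall y, Rabs (f y) <= Linf_norm f.
Proof.
  intros HC y. unfold Linf_norm.
  destruct (Lub_Rbar_correct (fun r => exists y, r = Rabs (f y))) as [Hub Hlub].
  assert (H1 : Rbar_le (Rabs (f y)) (Lub_Rbar (fun r => exists y, r = Rabs (f y)))) by (apply Hub; eauto).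
  assert (H2 : Rbar_le (Lub_Rbar (fun r => exists y, r = Rabs (f y))) C).
  { apply Hlub. intros x [z ->]. simpl. apply HC. }
  destruct (Lub_Rbar (fun r => exists y, r = Rabs (f y))); simpl in *; auto; contradiction.
Qed.

Lemma Lam_cont d1 d2 a Am Ap U V Lam : 1 <= a -> is_profile d1 d2 a a Am Ap U V Lam ->
  forall y, continuity_pt Lam y.
Proof.
  intros Ha (HU & _ & _ & HP1 & _) y.
  apply (continuity_pt_ext (fun z => - (d1 * Derive (Derive U) z + z / 2 * Derive U z) / a)).
  { intro z. specialize (HP1 z). field_simplify; [|lra]. apply Rmult_eq_reg_l with a; [|lra].
    field_simplify; lra. }
  destruct (HU y) as (H1 & H2 & H3).
  apply continuity_pt_div.
  apply continuity_pt_opp. apply continuity_pt_plus.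
  apply continuity_pt_mult. apply continuity_pt_const. intros ? ?; reflexivity.
  apply continuity_pt_filterlim. exact H3.
  apply continuity_pt_mult. apply continuity_pt_div. apply continuity_pt_id.
  apply continuity_pt_const. intros ? ?; reflexivity. lra.
  apply ctp_ex_derive; auto.
  apply continuity_pt_const. intros ? ?; reflexivity. lra.
Qed.

Lemma dens_cont p (U V : R -> R) (u v : R -> R -> R) t y : p <> 0 ->
  (forall z, 0 < U z /\ 0 < V z /\ 0 < u t z /\ 0 < v t z) ->
  (forall z, ex_derive U z /\ ex_derive V z /\ ex_derive (u t) z /\ ex_derive (v t) z) ->
  continuity_pt (relent_dens p U V u v t) y.
Proof.
  intros Hp Hpos Hd. unfold relent_dens.
  destruct (Hd y) as (HU & HV & Hu & Hv). destruct (Hpos y) as (PU & PV & Pu & Pv).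
  assert (C1 : continuity_pt (fun z => u t z / U z) y) by (apply ctp_ex_derive; auto_derive; repeat split; auto; lra).
  assert (C2 : continuity_pt (fun z => v t z / V z) y) by (apply ctp_ex_derive; auto_derive; repeat split; auto; lra).
  apply continuity_pt_plus; apply continuity_pt_mult.
  apply ctp_ex_derive; auto.
  apply (continuity_pt_comp (fun z => u t z / U z) (Fp p)); auto.
  apply ctp_ex_derive, ex_derive_Fp; auto. apply Rdiv_lt_0_compat; auto.
  apply ctp_ex_derive; auto.
  apply (continuity_pt_comp (fun z => v t z / V z) (Fp p)); auto.
  apply ctp_ex_derive, ex_derive_Fp; auto. apply Rdiv_lt_0_compat; auto.
Qed.

Lemma Lam_bound d1 d2 Am Ap U Lam : 0 < d1 -> 0 < d2 ->
  is_profile d1 d2 1 1 Am Ap U U Lam -> exists C, forall y, Rabs (Lam y / U y) <= C.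
Proof.
  intros Hd1 Hd2 Hprof.
  destruct (U_deriv_bounds d1 d2 1 Am Ap U Lam Hd1 Hd2 ltac:(lra) Hprof) as [B [HB HB']].
  destruct Hprof as (_ & _ & [m [M [Hm HmM]]] & HP1 & HP2 & _).
  exists (B / m). intro y.
  specialize (HP1 y). specialize (HP2 y).
  assert (EL : Lam y = y * Derive U y * (d1 / (d1 + d2) - 1/2)).
  { assert (E : Derive (Derive U) y = - (y * Derive U y) / (d1 + d2)).
    { apply Rmult_eq_reg_l with (d1 + d2); [|lra].
      replace ((d1 + d2) * (- (y * Derive U y) / (d1 + d2))) with (- (y * Derive U y)) by (field; lra). lra. }
    replace (Lam y) with (- (d1 * Derive (Derive U) y + y / 2 * Derive U y)) by lra.
    rewrite E. field. lra. }
  destruct (HmM y) as [[Hm1 HM1] _].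
  assert (HU : 0 < U y) by lra.
  unfold Rdiv. rewrite Rabs_mult, Rabs_inv, (Rabs_right (U y)) by lra.
  apply Rle_trans with (B * / U y).
  - apply Rmult_le_compat_r. left; apply Rinv_0_lt_compat; lra.
    rewrite EL, Rabs_mult. destruct (HB' y) as [_ HyU].
    assert (Rabs (d1 / (d1 + d2) - 1 / 2) <= 1).
    { apply Rabs_le. assert (0 < d1 / (d1 + d2) < 1).
      split. apply Rdiv_lt_0_compat; lra.
      apply Rmult_lt_reg_r with (d1 + d2); [lra|]. field_simplify; lra. lra. }
    pose proof (Rabs_pos (y * Derive U y)). nra.
  - apply Rmult_le_compat_l; auto. apply Rinv_le_contravar; lra.
Qed.


Lemma integral_unique (f : R -> R) l : is_RInt_gen f (Rbar_locally m_infty) (Rbar_locally p_infty) l -> integral_R f = l.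
Proof. intro H. unfold integral_R. apply (is_RInt_gen_unique (V:=R_CompleteNormedModule) (Fa := Rbar_locally m_infty) (Fb := Rbar_locally p_infty) f l H). Qed.

Lemma integ_scal (f : R -> R) c : integrable_R f ->
  integrable_R (fun y => c * f y) /\ integral_R (fun y => c * f y) = c * integral_R f.
Proof.
  intro Hf. pose proof (RInt_gen_correct _ Hf) as I.
  assert (I2 : is_RInt_gen (fun y => c * f y) (Rbar_locally m_infty) (Rbar_locally p_infty) (c * integral_R f)).
  { apply (is_RInt_gen_scal (V:=R_NormedModule) f c _ I). }
  split. eexists; exact I2.
  apply integral_unique. exact I2.
Qed.

Lemma integ_ext (f g : R -> R) : (forall y, f y = g y) -> integrable_R f ->
  integrable_R g /\ integral_R g = integral_R f.
Proof.
  intros E Hf. split.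
  - apply (ex_RInt_gen_ext_eq (V:=R_NormedModule) f g E Hf).
  - symmetry. apply (RInt_gen_ext_eq (V:=R_CompleteNormedModule) f g E Hf).
Qed.

Lemma integ_plus (f g : R -> R) : integrable_R f -> integrable_R g ->
  integrable_R (fun y => f y + g y) /\ integral_R (fun y => f y + g y) = integral_R f + integral_R g.
Proof.
  intros Hf Hg. pose proof (RInt_gen_correct _ Hf) as I1. pose proof (RInt_gen_correct _ Hg) as I2.
  assert (I3 := is_RInt_gen_plus (V:=R_NormedModule) f g _ _ I1 I2).
  split. eexists; exact I3.
  apply integral_unique. exact I3.
Qed.

Lemma case_i d1 d2 k al Am Ap U V Lam :
  0 < d1 -> 0 < d2 -> 0 < k -> 2 <= al ->
  is_profile d1 d2 al al Am Ap U V Lam ->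
  forall u v : R -> R -> R,
     is_solution d1 d2 k al al Am Ap U V Lam (al - 1) u v ->
     forall t, 0 < t ->
       Derive (relent (al - 1) U V u v) t <=
         - (1 / 2) * relent (al - 1) U V u v t
         + exp (- t) * integral_R (fun y => Lam y ^ 2 / (4 * k * Rpower (U y) al)).
Proof.
  intros Hd1 Hd2 Hk Hal Hprof u v Hsol t Ht.
  assert (Hprof' := Hprof).
  destruct Hprof' as (HU & HV & [m [M [Hm HmM]]] & HP1 & HP2 & HPe & _).
  assert (HUp : forall y, 0 < U y) by (intro y; destruct (HmM y) as [[? ?] _]; lra).
  assert (HVp : forall y, 0 < V y) by (intro y; destruct (HmM y) as [_ [? ?]]; lra).
  assert (Hsol' := Hsol).
  destruct Hsol' as (Hpos & _ & _ & _ & _ & _ & HintLam & _).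
  destruct (integ_scal _ (/ (4 * k)) HintLam) as [I1 E1].
  destruct (integ_ext (fun y => / (4 * k) * (Lam y ^ 2 / Rpower (U y) al)) (fun y => Lam y ^ 2 / (4 * k * Rpower (U y) al)) ltac:(intro y; cbv beta; field; split; [apply Rgt_not_eq, Rpower_pos'|lra]) I1) as [I2 E2].
  destruct (integ_scal _ (exp (- t)) I2) as [I3 E3].
  set (Q := fun y => exp (- t) * (Lam y ^ 2 / (4 * k * Rpower (U y) al))).
  assert (HQ := main_gen d1 d2 k al Am Ap U V Lam (al - 1) u v t Q Hd1 Hd2 Hk ltac:(lra) ltac:(lra) Hprof Hsol Ht).
  unfold Q in HQ. rewrite E3 in HQ.
  apply HQ.
  - intro y. apply continuity_pt_mult. apply continuity_pt_const. intros ? ?; reflexivity.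
    apply continuity_pt_div. apply continuity_pt_mult. apply (Lam_cont d1 d2 al Am Ap U V Lam); auto; lra.
    apply continuity_pt_mult. apply (Lam_cont d1 d2 al Am Ap U V Lam); auto; lra.
    apply continuity_pt_const. intros ? ?; reflexivity.
    apply continuity_pt_mult. apply continuity_pt_const. intros ? ?; reflexivity.
    apply (continuity_pt_comp U (fun x => Rpower x al)).
    apply ctp_ex_derive, HU. apply ctp_ex_derive, ex_derive_Rpower, HUp.
    apply Rgt_not_eq. apply Rmult_lt_0_compat. lra. apply Rpower_pos'.
  - exact I3.
  - intro y.
    destruct (Hpos t y ltac:(lra)) as [Hu Hv].
    set (r := u t y / U y). set (z := v t y / V y).
    assert (Hr : 0 < r) by (apply Rdiv_lt_0_compat; auto).
    assert (Hz : 0 < z) by (apply Rdiv_lt_0_compat; auto).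
    pose proof (ptw_i (al - 1) (exp t * k) (Rpower (U y) al) (Lam y) r z ltac:(lra)
                 ltac:(apply Rmult_lt_0_compat; [apply exp_pos|lra]) (Rpower_pos' _ _) Hr Hz) as P.
    replace (al - 1 + 1) with al in P by ring.
    assert (Ev : Rpower (v t y) al = Rpower (U y) al * Rpower z al).
    { rewrite (HPe y). rewrite Rpower_mult_distr by auto. f_equal. unfold z. field. apply Rgt_not_eq, HVp. }
    assert (Eu : Rpower (u t y) al = Rpower (U y) al * Rpower r al).
    { rewrite Rpower_mult_distr by auto. f_equal. unfold r. field. apply Rgt_not_eq, HUp. }
    rewrite Ev, Eu. rewrite exp_Ropp.
    replace (/ exp t * (Lam y ^ 2 / (4 * k * Rpower (U y) al))) with (Lam y ^ 2 / (4 * (exp t * k) * Rpower (U y) al)).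
    2:{ field. split. apply Rgt_not_eq, Rpower_pos'. split. lra. apply Rgt_not_eq, exp_pos. }
    lra.
Qed.

Lemma case_ii d1 d2 k Am Ap U V Lam :
  0 < d1 -> 0 < d2 -> 0 < k ->
  is_profile d1 d2 1 1 Am Ap U V Lam ->
  forall u v : R -> R -> R,
     is_solution d1 d2 k 1 1 Am Ap U V Lam (1 / 2) u v ->
     forall t, 0 < t ->
       let mu := (Linf_norm (fun y => Lam y / U y)) ^ 2 / (k * sqrt 8) in
       Derive (relent (1 / 2) U V u v) t <=
         - (1 / 2 - mu) * relent (1 / 2) U V u v t
         + exp (- t) * integral_R (fun y => (11 + sqrt 2) / (14 * k) * (Lam y ^ 2 / U y)).
Proof.
  intros Hd1 Hd2 Hk Hprof u v Hsol t Ht mu.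
  destruct (profile_U_eq_V d1 d2 1 Am Ap U V Lam ltac:(lra) Hprof) as [HUp EV]. subst V.
  destruct (Lam_bound d1 d2 Am Ap U Lam Hd1 Hd2 Hprof) as [C HC].
  pose proof (Linf_ge _ C HC) as HM.
  set (M := Linf_norm (fun y => Lam y / U y)) in *.
  assert (Hprof' := Hprof).
  destruct Hprof' as (HU & _ & _ & _ & _ & _ & _).
  assert (Hsol' := Hsol).
  destruct Hsol' as (Hpos & Hreg & _ & _ & Hint0 & _ & HintLam & _).
  destruct (integ_ext (fun y => Lam y ^ 2 / Rpower (U y) 1) (fun y => Lam y ^ 2 / U y)
     ltac:(intro y; cbv beta; rewrite Rpower_1; auto) HintLam) as [I1 _].
  set (c := (11 + sqrt 2) / (14 * k)).
  destruct (integ_scal _ c I1) as [I2 _].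
  destruct (integ_scal _ (exp (- t)) I2) as [I3 E3].
  destruct (integ_scal _ mu (Hint0 t ltac:(lra))) as [I4 E4].
  destruct (integ_plus _ _ I4 I3) as [I5 E5].
  set (Q := fun y => mu * relent_dens (1/2) U U u v t y + exp (- t) * (c * (Lam y ^ 2 / U y))).
  assert (HQ := main_gen d1 d2 k 1 Am Ap U U Lam (1/2) u v t Q Hd1 Hd2 Hk ltac:(lra) ltac:(lra) Hprof Hsol Ht).
  unfold Q in HQ. rewrite E5, E4, E3 in HQ. unfold relent.
  assert (Hfin : Derive (relent (1 / 2) U U u v) t <=
    - (1 / 2) * relent (1 / 2) U U u v t + (mu * integral_R (relent_dens (1 / 2) U U u v t)
       + exp (- t) * integral_R (fun y => c * (Lam y ^ 2 / U y)))).
  { apply HQ.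
    - intro y. apply continuity_pt_plus.
      + apply continuity_pt_mult. apply continuity_pt_const. intros ? ?; reflexivity.
        apply dens_cont. lra.
        intro z. destruct (Hpos t z ltac:(lra)). repeat split; auto.
        intro z. destruct (Hreg t z Ht) as (_ & Hu & _ & _ & Hv & _). destruct (HU z) as [HUz _].
        repeat split; auto.
      + apply continuity_pt_mult. apply continuity_pt_const. intros ? ?; reflexivity.
        apply continuity_pt_mult. apply continuity_pt_const. intros ? ?; reflexivity.
        apply continuity_pt_div. apply continuity_pt_mult. apply (Lam_cont d1 d2 1 Am Ap U U Lam); auto; lra.
        apply continuity_pt_mult. apply (Lam_cont d1 d2 1 Am Ap U U Lam); auto; lra.
        apply continuity_pt_const. intros ? ?; reflexivity.
        apply ctp_ex_derive, HU. apply Rgt_not_eq, HUp.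
    - exact I5.
    - intro y.
      destruct (Hpos t y ltac:(lra)) as [Hu Hv].
      unfold relent_dens.
      set (r := u t y / U y). set (z := v t y / U y).
      assert (Hr : 0 < r) by (apply Rdiv_lt_0_compat; auto).
      assert (Hz : 0 < z) by (apply Rdiv_lt_0_compat; auto).
      assert (HE : 1 <= exp t) by (pose proof (exp_ineq1_le t); lra).
      pose proof (ptw_ii (Lam y) (U y) M k (exp t) r z (HUp y) Hk HE (HM y) Hr Hz) as P.
      rewrite !Rpower_1 by auto.
      replace (v t y - u t y) with (U y * (z - r)) by (unfold r, z; field; apply Rgt_not_eq, HUp).
      rewrite exp_Ropp. unfold mu, c. lra. }
  unfold relent in Hfin. lra.
Qed.


Theorem mainTheorem14 (d1 d2 k al be Am Ap : R) (U V Lam : R -> R) :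
  0 < d1 -> 0 < d2 -> 0 < k -> 1 <= al -> 1 <= be -> 0 < Am -> 0 < Ap ->
  al = be ->
  is_profile d1 d2 al be Am Ap U V Lam ->
  (* (i) *)
  (2 <= al -> forall u v : R -> R -> R,
     is_solution d1 d2 k al be Am Ap U V Lam (al - 1) u v ->
     forall t, 0 < t ->
       Derive (relent (al - 1) U V u v) t <=
         - (1 / 2) * relent (al - 1) U V u v t
         + exp (- t) * integral_R (fun y => Lam y ^ 2 / (4 * k * Rpower (U y) al))) /\
  (* (ii) *)
  (al = 1 -> forall u v : R -> R -> R,
     is_solution d1 d2 k al be Am Ap U V Lam (1 / 2) u v ->
     forall t, 0 < t ->
       let mu := (Linf_norm (fun y => Lam y / U y)) ^ 2 / (k * sqrt 8) in
       Derive (relent (1 / 2) U V u v) t <=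
         - (1 / 2 - mu) * relent (1 / 2) U V u v t
         + exp (- t) * integral_R (fun y => (11 + sqrt 2) / (14 * k) * (Lam y ^ 2 / U y))).
Proof.
  intros Hd1 Hd2 Hk Hal Hbe HAm HAp Hab Hprof. subst be. split.
  - intros Hal2. apply case_i; auto.
  - intros H1. subst al. apply case_ii; auto.
Qed.
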